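(* For even integers $k\ge 2$ define $$c_k = \frac{k}{2(k/2+1)(k/2-1)} + (-1)^{k/2}\frac{(k/2)!\,(k/2-2)!}{2(k-1)!}, \qquad d_k = \frac{(-1)^{k/2}(k-1)!}{2^{k+1}}$$ (with $c_k$ considered for $k\ge 4$). Then for every even $k\geq 4$ and every odd positive integer $j\leq k/2-2$: $$\nu_2\!\left(\frac{d_{k-2}}{2c_kd_k}\right)\geq 1,\qquad \nu_2\!\left(\frac{k\,d_{k/2}^2}{2c_kd_k}\right)\geq 0,$$ $$\nu_2\!\left(\left(\binom{k/2}{j}+\binom{k/2-2}{j}\right)\frac{d_{j+1}d_{k-j-1}}{c_kd_k}\right)\geq 0.$$
   Context: For a prime $p$ and nonzero rational $x=a/b$, $\nu_p(x)=\nu_p(a)-\nu_p(b)$ where $\nu_p(m)$ is the exponent of the highest power of $p$ dividing the integer $m$; $\nu_p(0)=\infty$. *)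

(* Defs.v *)
From HB Require Import structures.
From mathcomp Require Import all_boot all_order all_algebra.
Set Implicit Arguments. Unset Strict Implicit. Unset Printing Implicit Defensive.
Import Order.TTheory GRing.Theory Num.Theory.
Local Open Scope ring_scope.

Definition padic_val (p : nat) (x : rat) : int :=
  (Posz (logn p `|numq x|%N) - Posz (logn p (`|denq x|%N)))%R.

(* nu_p(x) >= m, with the convention nu_p(0) = +infinity. *)
Definition padic_val_ge (p : nat) (x : rat) (m : int) : Prop :=
  x = 0 \/ m <= padic_val p x.

Definition ck (k : nat) : rat :=
  (k%:R / (2 * (k./2 + 1)%:R * (k./2 - 1)%:R))
  + (-1) ^+ (k./2) * ((k./2)`!%:R * (k./2 - 2)`!%:R) / (2 * (k - 1)`!%:R).

Definition dk (k : nat) : rat :=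
  (-1) ^+ (k./2) * (k - 1)`!%:R / 2 ^+ (k + 1).

(* Main.v *)
Set Warnings "-notation-overridden,-ambiguous-paths".
Require Import Defs.
From HB Require Import structures.
From mathcomp Require Import all_boot all_order all_algebra.
From mathcomp Require Import zify ring lra.
Import Order.TTheory GRing.Theory Num.Theory.

Fixpoint oddf (n : nat) : nat := if n is n'.+1 then n'.*2.+1 * oddf n' else 1.

Lemma oddf_odd n : odd (oddf n).
Proof. elim: n => //= n IH; rewrite oddM /= odd_double IH. by []. Qed.

Lemma oddf_gt0 n : 0 < oddf n.
Proof. by rewrite odd_gt0 // oddf_odd. Qed.

Lemma fact_double n : (n.*2)`! = 2 ^ n * n`! * oddf n.
Proof.
elim: n => // n IH.
rewrite doubleS !factS IH /= expnS. rewrite -!mul2n. ring.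
Qed.

Lemma oddf_mod4 p : oddf p.*2 %% 4 = if odd p then 3 else 1.
Proof.
elim: p => // p IH.
rewrite doubleS /= mulnA -modnMm IH.
have->: (p.*2.+1.*2.+1 * p.*2.*2.+1) %% 4 = 3.
  rewrite -modnMm; have->: p.*2.+1.*2.+1 %% 4 = 3 by lia.
  by have->: p.*2.*2.+1 %% 4 = 1 by lia.
by case: (odd p).
Qed.

Lemma cancel_r a b c : 0 < c -> a * c = b * c -> a = b.
Proof. by move=> hc /eqP; rewrite eqn_pmul2r // => /eqP. Qed.

Lemma bin_rec0 p : 'C(p.*2.*2, p.*2) * (oddf p)^2 = oddf p.*2 * 'C(p.*2, p).
Proof.
set A := 'C(_, _); set B := 'C(p.*2, p).
have hA := bin_fact (leq_addl p.*2 p.*2).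
have e : p.*2 + p.*2 - p.*2 = p.*2 by lia.
rewrite e addnn in hA.
have hB := bin_fact (leq_addl p p).
have e' : p + p - p = p by lia.
rewrite e' addnn in hB.
rewrite -/A in hA; rewrite -/B in hB.
rewrite (fact_double p.*2) in hA.
have h1 : A * (p.*2)`! = 2 ^ p.*2 * oddf p.*2.
  apply: (@cancel_r _ _ (p.*2)`!); first exact: fact_gt0.
  by rewrite -mulnA hA; ring.
rewrite (fact_double p) in hB h1.
have h2 : B * p`! = 2 ^ p * oddf p.
  apply: (@cancel_r _ _ (p`!)); first exact: fact_gt0.
  by rewrite -mulnA hB; ring.
apply: (@cancel_r _ _ (2 ^ p * p`!)); first by rewrite muln_gt0 expn_gt0 fact_gt0.
transitivity (oddf p * (A * (2 ^ p * p`! * oddf p))); first by ring.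
rewrite h1.
transitivity (2 ^ p * oddf p.*2 * (B * p`!)); last by ring.
rewrite h2 -addnn expnD; ring.
Qed.

Lemma bin_rec1 p : 'C(p.*2.+1.*2, p.*2.+1) * p.*2.+1 = 2 * (p.*2.*2).+1 * 'C(p.*2.*2, p.*2).
Proof.
set A := 'C(_, _); set B := 'C(p.*2.*2, p.*2).
have hA := bin_fact (leq_addl p.*2.+1 p.*2.+1).
have e : p.*2.+1 + p.*2.+1 - p.*2.+1 = p.*2.+1 by lia.
rewrite e addnn -/A in hA.
have hB := bin_fact (leq_addl p.*2 p.*2).
have e' : p.*2 + p.*2 - p.*2 = p.*2 by lia.
rewrite e' addnn -/B in hB.
have ee : (p.*2.+1).*2 = (p.*2.*2).+2 by lia.
rewrite ee !factS -hB in hA.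
apply: (@cancel_r _ _ (p.*2.+1 * (p.*2)`! * (p.*2)`!)).
  by rewrite !muln_gt0 fact_gt0.
transitivity (A * (p.*2.+1 * (p.*2)`! * (p.*2.+1 * (p.*2)`!))); first by ring.
rewrite hA. have->: (p.*2.*2).+2 = 2 * p.*2.+1 by lia. ring.
Qed.

Lemma logn_odd x : odd x -> logn 2 x = 0.
Proof. by move=> o; apply: logn_coprime; rewrite coprime2n. Qed.

Lemma logn2M x y : 0 < x -> 0 < y -> logn 2 (x * y) = logn 2 x + logn 2 y.
Proof. exact: lognM. Qed.

Lemma logn2_double x : 0 < x -> logn 2 (x.*2) = (logn 2 x).+1.
Proof. by move=> hx; rewrite -mul2n lognM // logn_prime. Qed.

Lemma bin_gt0' n m : m <= n -> 0 < 'C(n, m).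
Proof. by rewrite bin_gt0. Qed.

Lemma v_rec p : logn 2 'C(p.*2.+1.*2, p.*2.+1) = (logn 2 'C(p.*2, p)).+1.
Proof.
have h1 := bin_rec1 p. have h0 := bin_rec0 p.
have pA : 0 < 'C(p.*2.+1.*2, p.*2.+1) by apply: bin_gt0'; lia.
have pB : 0 < 'C(p.*2.*2, p.*2) by apply: bin_gt0'; lia.
have pC : 0 < 'C(p.*2, p) by apply: bin_gt0'; lia.
have o1 := oddf_gt0 p. have o2 := oddf_gt0 p.*2.
have := congr1 (logn 2) h1. rewrite !lognM ?muln_gt0 ?expn_gt0 //.
rewrite [logn 2 p.*2.+1]logn_odd /= ?odd_double //.
rewrite [logn 2 (p.*2.*2).+1]logn_odd /= ?odd_double //.
rewrite [logn 2 2]logn_prime // addn0 => ->.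
have := congr1 (logn 2) h0. rewrite !lognM ?muln_gt0 ?expn_gt0 ?o1 //.
rewrite [logn 2 (oddf p)]logn_odd ?oddf_odd // [logn 2 (oddf p.*2)]logn_odd ?oddf_odd //. lia.
Qed.

Lemma C_even n : 0 < n -> 2 %| 'C(n.*2, n).
Proof.
move=> hn. have := mul_bin_diag n.*2 n.-1.
rewrite prednK // => h.
have: n * 'C(n.*2, n) = n * (2 * 'C(n.*2.-1, n.-1)) by rewrite -h -mul2n; ring.
by move/eqP; rewrite eqn_pmul2l // => /eqP ->; rewrite dvdn_mulr.
Qed.

Lemma C_v_ge1 n : 0 < n -> 0 < logn 2 'C(n.*2, n).
Proof.
move=> hn; have h := @C_even n hn.
have pC : 0 < 'C(n.*2, n) by apply: bin_gt0'; lia.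
by rewrite -(pfactor_dvdn 1 (isT : prime 2) pC).
Qed.

Lemma key m : logn 2 m.+1 <= logn 2 'C(m.*2, m) /\
  (logn 2 m.+1 = logn 2 'C(m.*2, m) -> m.+1 = 2 ^ logn 2 m.+1).
Proof.
elim/ltn_ind: m => m IH.
case: m IH => [|m] IH; first by rewrite bin0 logn1.
have [o|e] := boolP (odd m).
  have -> : logn 2 m.+2 = 0 by apply: logn_odd; rewrite /= o.
  split=> //. move=> h. have := @C_v_ge1 m.+1 (ltn0Sn m). by rewrite -h.
have hm : m = (m./2).*2 by move: (odd_double_half m); rewrite (negbTE e); lia.
have [IH1 IH2] := IH m./2 (ltac:(lia)).
rewrite hm v_rec.
have -> : (m./2).*2.+2 = (m./2).+1.*2 by lia.
rewrite logn2_double //; split; first by [].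
by move=> /eq_add_S/IH2 => h; rewrite expnS -h; lia.
Qed.

Lemma mod4M x y a b : x %% 4 = a -> y %% 4 = b -> (x * y) %% 4 = (a * b) %% 4.
Proof. by rewrite -modnMm => -> ->. Qed.
Arguments mod4M {x y a b}.

Lemma spec a : forall m, 0 < a -> m.+1 = 2 ^ a ->
  exists2 u, 'C(m.*2, m) = 2 ^ a * u & u %% 4 = 1.
Proof.
elim: a => // a IH m _ hm.
case: a IH hm => [|a] IH hm.
  have -> : m = 1 by move: hm; rewrite expn1; lia.
  by exists 1.
have hp : exists p, m = p.*2.+1 /\ p.+1 = 2 ^ a.+1.
  exists m./2. have := odd_double_half m. rewrite expnS in hm.
  have : odd m. have := congr1 odd hm. rewrite oddM /=. by case: (odd m).
  move=> ->; lia.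
case: hp => p [-> hp].
have [u hu u4] := IH p (ltn0Sn a) hp.
have h1 := bin_rec1 p. have h0 := bin_rec0 p.
rewrite hu in h0.
set X := 'C(_, _) in h1 *.
have oddp : odd p.
  have := congr1 odd hp. rewrite expnS oddM /=. by case: (odd p).
have hX : X * (p.*2.+1 * oddf p ^ 2) = 2 ^ a.+2 * ((p.*2.*2).+1 * oddf p.*2 * u).
  transitivity ((X * p.*2.+1) * oddf p ^ 2); first by ring.
  rewrite h1.
  transitivity (2 * (p.*2.*2).+1 * ('C(p.*2.*2, p.*2) * oddf p ^ 2)); first by ring.
  rewrite h0 !expnS. ring.
have hd : 2 ^ a.+2 %| X.
  have : 2 ^ a.+2 %| X * (p.*2.+1 * oddf p ^ 2) by rewrite hX dvdn_mulr.
  rewrite Gauss_dvdl //. rewrite coprime_pexpl // coprime2n oddM /= odd_double.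
  by rewrite oddX oddf_odd orbT.
case/dvdnP: hd => u' hu'.
exists u'; first by rewrite hu' mulnC.
rewrite hu' in hX.
have e : u' * (p.*2.+1 * oddf p ^ 2) = (p.*2.*2).+1 * oddf p.*2 * u.
  apply/eqP; rewrite -(eqn_pmul2l (expn_gt0 2 a.+2)). apply/eqP.
  rewrite -hX; ring.
have := congr1 (fun x => x %% 4) e => /=.
have o4 : oddf p ^ 2 %% 4 = 1.
  have := oddf_odd p. have : oddf p %% 4 = 1 \/ oddf p %% 4 = 3.
    have := oddf_odd p; lia.
  by case=> h _; rewrite expnS expn1; rewrite (mod4M h h).
have q1 : p.*2.+1 %% 4 = 3 by lia.
have q2 : (p.*2.+1 * oddf p ^ 2) %% 4 = 3 by rewrite (mod4M q1 o4).
have q3 : (p.*2.*2).+1 %% 4 = 1 by lia.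
have q4 : oddf p.*2 %% 4 = 3 by rewrite oddf_mod4 oddp.
rewrite (mod4M (mod4M q3 q4) u4) -modnMm q2 /=.
move=> h; have h2 : (u' %% 4 * 3) %% 4 = 3 by rewrite h. clear h. lia.
Qed.

Definition Nn m := if odd m then m * 'C(m.*2, m) - m.+1 else m * 'C(m.*2, m) + m.+1.

Lemma C_ge2 m : 0 < m -> 2 <= 'C(m.*2, m).
Proof.
move=> hm. have h := @C_even m hm.
have pC : 0 < 'C(m.*2, m) by apply: bin_gt0'; lia.
by apply: dvdn_leq.
Qed.

Lemma Nn_gt0 m : 2 <= m -> 0 < Nn m.
Proof.
move=> hm; have := @C_ge2 m (ltac:(lia)); rewrite /Nn.
case: (odd m); nia.
Qed.

Lemma vN_gen m : 2 <= m -> odd m -> logn 2 m.+1 < logn 2 'C(m.*2, m) ->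
  logn 2 (Nn m) <= logn 2 m.+1.
Proof.
move=> hm om hlt. rewrite leqNgt; apply/negP => hN.
have pN := @Nn_gt0 m hm.
have pC : 0 < 'C(m.*2, m) by apply: bin_gt0'; lia.
have d1 : 2 ^ (logn 2 m.+1).+1 %| Nn m by rewrite pfactor_dvdn.
have d2 : 2 ^ (logn 2 m.+1).+1 %| m * 'C(m.*2, m).
  by apply: dvdn_mull; rewrite pfactor_dvdn.
have d3 : 2 ^ (logn 2 m.+1).+1 %| m.+1.
  set L := logn 2 m.+1 in d1 d2 *.
  have -> : m.+1 = m * 'C(m.*2, m) - Nn m.
    have := @C_ge2 m (ltac:(lia)). rewrite /Nn om. nia.
  by apply: dvdn_sub.
by move: d3; rewrite pfactor_dvdn // ltnn.
Qed.

Lemma vN_spec m a : 2 <= m -> m.+1 = 2 ^ a -> logn 2 (Nn m) <= a.+1.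
Proof.
move=> hm ha.
have a2 : 2 <= a.
  case: a ha => [|[|a]] //= ha; move: ha; rewrite ?expn1; lia.
have m4 : m %% 4 = 3.
  move: ha; rewrite -(subnKC a2) expnD => ha. lia.
have om : odd m by lia.
have [u hu u4] := @spec a m (ltac:(lia)) ha.
have mu4 : (m * u) %% 4 = 3 by rewrite (mod4M m4 u4).
have pu : 0 < u by lia.
have e : Nn m = 2 ^ a * (m * u - 1).
  rewrite /Nn om hu ha. rewrite mulnBr muln1. congr (_ - _). ring.
rewrite e lognM ?expn_gt0 //; last by nia.
rewrite pfactorK //; suff : logn 2 (m * u - 1) <= 1 by lia.
rewrite leqNgt; apply/negP => h.
have : 2 ^ 2 %| m * u - 1 by rewrite pfactor_dvdn //; nia.
rewrite /dvdn => /eqP. lia.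
Qed.

Lemma bin_pow2_even a i : 0 < i < 2 ^ a -> 2 %| 'C(2 ^ a, i).
Proof.
case/andP=> i0 ia.
have h := mul_bin_diag (2 ^ a) i.-1. rewrite prednK // in h.
have pC : 0 < 'C(2 ^ a, i) by apply: bin_gt0'; lia.
have a0 : 0 < a by move: ia; case: (a) => //; rewrite expn0; lia.
suff : 2 ^ 1 %| 'C(2 ^ a, i) by rewrite expn1.
rewrite pfactor_dvdn // lt0n; apply/negP => /eqP hC.
have : 2 ^ a %| i * 'C(2 ^ a, i) by rewrite -h dvdn_mulr.
rewrite Gauss_dvdl; last first.
  rewrite coprime_pexpl // coprime2n. apply/negP => /negP ev.
  have : 2 ^ 1 %| 'C(2 ^ a, i) by rewrite expn1 dvdn2.
  by rewrite pfactor_dvdn // hC.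
move/dvdn_leq => /(_ i0). lia.
Qed.

Lemma Cbig_even m a n : m.+1 = 2 ^ a -> 2 <= m -> m <= n -> n.+3 <= m.*2 ->
  2 %| 'C(n.+2, m).
Proof.
move=> ha hm h1 h2.
have -> : n.+2 = 2 ^ a + (n.+1 - m) by lia.
rewrite -binomial.Vandermonde. apply: dvdn_sum => [[j hj]] _ /=.
case: j hj => [|j] hj.
  rewrite [X in _ * X]bin_small ?muln0 //; lia.
apply: dvdn_mulr; apply: bin_pow2_even; lia.
Qed.

Lemma T_even m a n : m.+1 = 2 ^ a -> 2 <= m -> m <= n -> n.+3 <= m.*2 ->
  2 %| 'C(n, m - 2) + 'C(n, m).
Proof.
move=> ha hm h1 h2. have := @Cbig_even m a n ha hm h1 h2.
have [q ->] : exists q, m = q.+2 by exists (m - 2); lia.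
rewrite !binS subn2 /=.
have -> : 'C(n, q.+2) + 'C(n, q.+1) + ('C(n, q.+1) + 'C(n, q)) =
  ('C(n, q) + 'C(n, q.+2)) + 2 * 'C(n, q.+1) by ring.
by rewrite dvdn_addl // dvdn_mulr.
Qed.

Lemma vN_bound m : 2 <= m -> logn 2 (Nn m) <= logn 2 m.+1 \/
  [/\ logn 2 m.+1 = logn 2 'C(m.*2, m), m.+1 = 2 ^ (logn 2 m.+1),
      2 <= logn 2 m.+1 & logn 2 (Nn m) <= (logn 2 m.+1).+1].
Proof.
move=> hm.
have [om|em] := boolP (odd m); last first.
  left. rewrite logn_odd //. have /dvdnP[c hc] := @C_even m (ltac:(lia)).
  rewrite /Nn (negbTE em) hc oddD !oddM /= andbF andbF /= (negbTE em).
  by [].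
have [k1 k2] := key m.
have [lt|eq] := ltnP (logn 2 m.+1) (logn 2 'C(m.*2, m)).
  by left; apply: vN_gen.
have e : logn 2 m.+1 = logn 2 'C(m.*2, m) by apply/eqP; rewrite eqn_leq k1 eq.
have h2 := k2 e.
right; split => //.
  move: h2; case: (logn 2 m.+1) => [|[|a]] //= h; move: h; rewrite ?expn1; lia.
exact: vN_spec.
Qed.

Lemma logn_ge0 x : 0 <= logn 2 x. Proof. by []. Qed.

Lemma NT1 m : 2 <= m -> (logn 2 (m.*2.-1 * Nn m)).+1 <= logn 2 (m.+1 * 'C(m.*2, m)).
Proof.
move=> hm. have pN := @Nn_gt0 m hm.
have pC : 0 < 'C(m.*2, m) by apply: bin_gt0'; lia.
have b1 := @C_v_ge1 m (ltac:(lia)).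
rewrite !lognM //; last by lia.
rewrite (@logn_odd m.*2.-1); last by (have -> : m.*2.-1 = (m.-1).*2.+1 by lia); rewrite /= odd_double.
case: (@vN_bound m hm) => [h|[e _ a2 h]]; lia.
Qed.

Lemma NT2 m : 2 <= m -> logn 2 (Nn m) <= logn 2 (m.-1 * m.+1).
Proof.
move=> hm. rewrite lognM; last by []; last by lia.
case: (@vN_bound m hm) => [h|[e em a2 h]]; first lia.
suff : 0 < logn 2 m.-1 by lia.
have pm : 0 < m.-1 by lia.
rewrite -(pfactor_dvdn 1 (isT : prime 2) pm) expn1 dvdn2.
have : 4 %| m.+1 by rewrite em -(subnKC a2) expnD dvdn_mulr.
move=> h4. lia.
Qed.

Lemma NT3 m n : 2 <= m -> m <= n -> n.+3 <= m.*2 ->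
  logn 2 (Nn m) <= logn 2 (('C(n, m - 2) + 'C(n, m)) * m.+1).
Proof.
move=> hm h1 h2.
have pT : 0 < 'C(n, m - 2) + 'C(n, m) by rewrite addn_gt0 [0 < 'C(n, m)]bin_gt0 h1 orbT.
rewrite lognM //.
case: (@vN_bound m hm) => [h|[e em a2 h]]; first lia.
suff : 0 < logn 2 ('C(n, m - 2) + 'C(n, m)) by lia.
rewrite -(pfactor_dvdn 1 (isT : prime 2) pT) expn1.
exact: (@T_even m _ n em hm h1 h2).
Qed.

Lemma X3_nat p j : j <= p ->
  ('C(p.+2, j) + 'C(p, j)) * j`! * (p.*2.+2 - j)`! * p.+1 * 'C((p.+2).*2, p.+2) =
  2 * (p.*2.+3)`! * ('C(p.*2.+2 - j, p) + 'C(p.*2.+2 - j, p.+2)).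
Proof.
move=> hj.
set n := p.*2.+2 - j.
have hi := @bin_fact p.+2 j (ltac:(lia)).
have hii := @bin_fact n p (ltac:(lia)).
have hiii := bin_fact hj.
have hiv := @bin_fact n p.+2 (ltac:(lia)).
have e1 : n - p = p.+2 - j by lia.
have e2 : n - p.+2 = p - j by lia.
rewrite e1 in hii; rewrite e2 in hiv.
have hv := bin_fact (leq_addl p.+2 p.+2).
rewrite addnK addnn in hv.
have e4 : ((p.+2).*2 = (p.*2.+3).+1) by lia.
set C := 'C((p.+2).*2, p.+2) in hv *.
have t1 : 'C(p.+2, j) * j`! * n`! = (p.+2)`! * p`! * 'C(n, p).
  rewrite -hii -hi. ring.
have t2 : 'C(p, j) * j`! * n`! = (p.+2)`! * p`! * 'C(n, p.+2).
  rewrite -hiv -hiii. ring.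
have t3 : C * (p.+2)`! * (p.+1)`! = 2 * (p.*2.+3)`!.
  apply: (@cancel_r _ _ p.+2) => //.
  transitivity (C * ((p.+2)`! * (p.+2)`!)).
    rewrite (factS p.+1). ring.
  rewrite hv e4 (factS (p.*2.+3)). have -> : (p.*2.+3).+1 = 2 * p.+2 by lia. ring.
transitivity (('C(p.+2, j) * j`! * n`! + 'C(p, j) * j`! * n`!) * p.+1 * C); first by ring.
rewrite t1 t2 -t3 (factS p). ring.
Qed.

Local Open Scope ring_scope.


Lemma pv_frac (x : rat) (a b : nat) : (0 < a)%N -> (0 < b)%N ->
  `|x| = a%:R / b%:R -> padic_val 2 x = (logn 2 a)%:Z - (logn 2 b)%:Z.
Proof.
move=> ha hb hx.
have hD := denq_gt0 x.
have e := numqE x.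
have e2 : (`|numq x|%N)%:R = `|x| * (`|denq x|%N)%:R :> rat.
  rewrite !natr_absz !intr_norm e normrM. congr (_ * _).

rewrite hx in e2.
have e3 : (`|numq x| * b = a * `|denq x|)%N.
  apply/eqP; rewrite -(eqr_nat rat) !natrM e2.
  by rewrite mulrAC divfK // pnatr_eq0 -lt0n.
have x0 : x != 0.
  apply/negP => /eqP x0; move: hx; rewrite x0 normr0 => /esym/eqP.
  rewrite mulf_eq0 invr_eq0 !pnatr_eq0; lia.
have pn : (0 < `|numq x|)%N by rewrite absz_gt0 numq_eq0.
have pd : (0 < `|denq x|)%N by rewrite absz_gt0 gt_eqF.
have := congr1 (logn 2) e3; rewrite !lognM // => e4.
rewrite /padic_val. lia.
Qed.

Lemma pv_ge (x : rat) (a b e : nat) : (0 < a)%N -> (0 < b)%N ->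
  `|x| = a%:R / b%:R -> (e + logn 2 b <= logn 2 a)%N -> padic_val_ge 2 x e%:Z.
Proof.
move=> ha hb hx he; right; rewrite (@pv_frac x a b ha hb hx).
lia.
Qed.


Ltac sidec := repeat (apply/andP; split); try assumption;
  try apply: expf_neq0; apply/eqP => ?; lra.

Lemma dk_abs n : `|dk n| = (n.-1)`!%:R / 2 ^+ (n + 1).
Proof.
rewrite /dk normrM normrM normrV ?unitfE ?expf_neq0 // normrX normrN1 expr1n mul1r.
by rewrite normrX ger0_norm // ger0_norm // subn1.
Qed.

Lemma ck_eq p : ck (p.+2).*2 =
  (Nn p.+2)%:R / ((p.+1 * p.+3 * 'C((p.+2).*2, p.+2))%N)%:R.
Proof.
rewrite /ck doubleK.
have e1 : ((p.+2).*2 - 1 = (p.*2.+1).+2)%N by lia.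
have e2 : (p.+2 - 2 = p)%N by lia.
have e3 : (p.+2 - 1 = p.+1)%N by lia.
rewrite e1 e2 e3.
have hC := bin_fact (leq_addl p.+2 p.+2).
rewrite addnK addnn in hC.
set C := 'C(_, _) in hC *.
have e4 : ((p.+2).*2 = (p.*2.+1).+3)%N by lia.
rewrite e4 (factS (p.*2.+3)) in hC.
set F := (p.*2.+1).+2`! in hC *.
have hC' : (C%:R * ((p.+2)%:R * (p.+1)%:R * p`!%:R) ^+ 2 = (p.*2.+1).+3%:R * F%:R :> rat).
  have := congr1 (fun n => n%:R : rat) hC; rewrite /= !factS !natrM => <-; ring.
have CP : C%:R != 0 :> rat by rewrite pnatr_eq0 -lt0n /C bin_gt0; lia.
have PP : p`!%:R != 0 :> rat by rewrite pnatr_eq0 -lt0n fact_gt0.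
have eF : F%:R = C%:R * ((p.+2)%:R * (p.+1)%:R * p`!%:R) ^+ 2 / (p.*2.+1).+3%:R :> rat.
  by rewrite hC' mulrC mulKf // pnatr_eq0.
have eN : (Nn p.+2)%:R = (p.+2)%:R * C%:R + (-1) ^+ p * (p.+3)%:R :> rat.
  rewrite /Nn -signr_odd /=. case: (odd p) => /=.
    rewrite natrB ?natrM ?expr1 ?mulN1r //. have := @C_ge2 p.+2 isT. rewrite -/C. nia.
  by rewrite natrD natrM expr0 mul1r.
clearbody C F. rewrite eN eF !factS -!addnn !exprS mulN1r mulN1r opprK !natrM !natrD !mulrSr.
field.
have := ler0n rat p. move: CP PP; clear.
move=> CP PP hp; rewrite CP PP /=; repeat (apply/andP; split); apply/eqP => ?; lra.
Qed.

Lemma ck_abs p : `|ck (p.+2).*2| =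
  (Nn p.+2)%:R / ((p.+1 * p.+3 * 'C((p.+2).*2, p.+2))%N)%:R.
Proof. by rewrite ck_eq ger0_norm // divr_ge0 // ler0n. Qed.

Lemma dk_neq0 n : dk n != 0.
Proof.
rewrite /dk mulf_neq0 ?mulf_neq0 ?signr_eq0 ?invr_eq0 ?expf_neq0 //.
by rewrite pnatr_eq0 -lt0n fact_gt0.
Qed.

Lemma ck_neq0 p : ck (p.+2).*2 != 0.
Proof.
have pN := @Nn_gt0 p.+2 isT.
have pC : (0 < 'C((p.+2).*2, p.+2))%N by rewrite bin_gt0; lia.
rewrite ck_eq mulf_neq0 // ?invr_eq0 pnatr_eq0 -lt0n //.
by rewrite !muln_gt0 pC.
Qed.

Lemma X1 p : padic_val_ge 2 (dk ((p.+2).*2 - 2) / (2 * ck (p.+2).*2 * dk (p.+2).*2)) 1.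
Proof.
have pN := @Nn_gt0 p.+2 isT.
have pC : (0 < 'C((p.+2).*2, p.+2))%N by rewrite bin_gt0; lia.
apply: (@pv_ge _ (p.+3 * 'C((p.+2).*2, p.+2)) ((p.+2).*2.-1 * Nn p.+2) 1).
- by rewrite muln_gt0 pC.
- by rewrite muln_gt0 pN; lia.
- rewrite normrM normrV ?unitfE; last first.
    apply: mulf_neq0; [apply: mulf_neq0; [by [] | exact: ck_neq0] | exact: dk_neq0].
  rewrite (dk_abs ((p.+2).*2 - 2)) normrM normrM (dk_abs ((p.+2).*2)) ck_abs normr_nat.
  have -> : (((p.+2).*2 - 2).-1 = p.*2.+1)%N by lia.
  have -> : (((p.+2).*2 - 2) + 1 = p.*2.+3)%N by lia.
  have -> : ((p.+2).*2.-1 = p.*2.+3)%N by lia.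
  have -> : ((p.+2).*2 + 1 = p.*2.+4.+1)%N by lia.
  rewrite !factS.
  set C := 'C(_, _). set N := Nn _. set F := (p.*2)`!.
  have CP : C%:R != 0 :> rat by rewrite pnatr_eq0 -lt0n.
  have NP : N%:R != 0 :> rat by rewrite pnatr_eq0 -lt0n.
  have FP : F%:R != 0 :> rat by rewrite pnatr_eq0 -lt0n fact_gt0.
  have TP : 2 ^+ p.*2 != 0 :> rat by rewrite expf_neq0.
  clearbody C N F.
  rewrite !exprS -!addnn !natrM ?natrD !mulrSr.
  have hp := ler0n rat p.
  field.
  sidec.
- rewrite add1n. exact: NT1.
Qed.

Lemma hC_rat p : ('C((p.+2).*2, p.+2))%:R * ((p.+2)%:R * (p.+1)%:R * p`!%:R) ^+ 2 =
  ((p.*2.+4) * (p.*2.+3) * (p.*2.+2) * (p.*2.+1))%:R * (p.*2)`!%:R :> rat.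
Proof.
have hC := bin_fact (leq_addl p.+2 p.+2).
rewrite addnK addnn in hC.
have e4 : ((p.+2).*2 = p.*2.+4)%N by lia.
rewrite [in X in _ = X]e4 !factS in hC.
have := congr1 (fun n => n%:R : rat) hC; rewrite /= !natrM => h.
apply: (etrans _ (etrans h _)); ring.
Qed.

Lemma X2 p : padic_val_ge 2 (((p.+2).*2)%:R * dk ((p.+2).*2)./2 ^+ 2 / (2 * ck (p.+2).*2 * dk (p.+2).*2)) 0.
Proof.
have pN := @Nn_gt0 p.+2 isT.
have pC : (0 < 'C((p.+2).*2, p.+2))%N by rewrite bin_gt0; lia.
apply: (@pv_ge _ (p.+1 * p.+3) (Nn p.+2) 0).
- by [].
- by [].
- rewrite normrM normrV ?unitfE; last first.
    apply: mulf_neq0; [apply: mulf_neq0; [by [] | exact: ck_neq0] | exact: dk_neq0].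
  rewrite doubleK normrM normrX (dk_abs p.+2) normr_nat.
  rewrite normrM normrM (dk_abs ((p.+2).*2)) ck_abs normr_nat.
  have -> : ((p.+2).*2.-1 = p.*2.+3)%N by lia.
  have -> : ((p.+2).*2 + 1 = p.*2.+4.+1)%N by lia.
  have -> : ((p.+2) + 1 = p.+3)%N by lia.
  have hC := hC_rat p.
  rewrite !factS.
  move: hC. set C := 'C(_, _). set N := Nn _. set F := (p.*2)`!. set P := p`!.
  move=> hC.
  have CP : C%:R != 0 :> rat by rewrite pnatr_eq0 -lt0n.
  have NP : N%:R != 0 :> rat by rewrite pnatr_eq0 -lt0n.
  have FP : F%:R != 0 :> rat by rewrite pnatr_eq0 -lt0n fact_gt0.
  have PP : P%:R != 0 :> rat by rewrite pnatr_eq0 -lt0n fact_gt0.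
  clearbody C N F P.
  have YP : ((p.*2.+4) * (p.*2.+3) * (p.*2.+2) * (p.*2.+1))%:R != 0 :> rat by rewrite pnatr_eq0.
  have eF : F%:R = C%:R * ((p.+2)%:R * (p.+1)%:R * P%:R) ^+ 2 /
     ((p.*2.+4) * (p.*2.+3) * (p.*2.+2) * (p.*2.+1))%:R :> rat.
    by rewrite hC [_ * F%:R]mulrC mulfK.
  rewrite !natrM eF.
  rewrite !exprS -!addnn ?exprD !natrM ?natrD !mulrSr ?natrD.
  have hp := ler0n rat p.
  field.
  sidec.
- by rewrite add0n; exact: NT2.
Qed.

Lemma X3 p j : odd j -> (j <= p)%N ->
  padic_val_ge 2 (('C(p.+2, j) + 'C(p, j))%:R * dk j.+1 * dk ((p.+2).*2 - j - 1)
     / (ck (p.+2).*2 * dk (p.+2).*2)) 0.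
Proof.
move=> oj hj.
have j1 : (1 <= j)%N by case: j oj {hj}.
have pN := @Nn_gt0 p.+2 isT.
have pC : (0 < 'C((p.+2).*2, p.+2))%N by rewrite bin_gt0; lia.
set n := (p.*2.+2 - j)%N.
have pT : (0 < 'C(n, p) + 'C(n, p.+2))%N.
  by rewrite addn_gt0 [(0 < 'C(n, p.+2))%N]bin_gt0; apply/orP; right; lia.
apply: (@pv_ge _ (('C(n, p.+2 - 2) + 'C(n, p.+2)) * p.+3) (Nn p.+2) 0).
- by rewrite muln_gt0 subn2 pT.
- by [].
- rewrite normrM normrV ?unitfE; last first.
    apply: mulf_neq0; [exact: ck_neq0 | exact: dk_neq0].
  rewrite normrM normrM (dk_abs j.+1) (dk_abs ((p.+2).*2 - j - 1)) normr_nat.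
  rewrite normrM (dk_abs ((p.+2).*2)) ck_abs.
  have -> : (((p.+2).*2 - j - 1).-1 = n)%N by rewrite /n; lia.
  have -> : (((p.+2).*2 - j - 1) + 1 = (p.+2).*2 - j)%N by lia.
  have -> : ((p.+2).*2.-1 = p.*2.+3)%N by lia.
  rewrite subn2 /=.
  have -> : (j.+1 + 1 = j.+2)%N by lia.
  have hX := @X3_nat p j hj. rewrite -/n in hX.
  have ep : (2 ^+ ((p.+2).*2 - j) = 2 ^+ ((p.+2).*2 + 1) * 2 / 2 ^+ j.+2 :> rat).
    apply/(mulIf (_ : 2 ^+ j.+2 != 0)); first by rewrite expf_neq0.
    rewrite divfK ?expf_neq0 // -exprSr -exprD. congr (_ ^+ _). lia.
  rewrite ep.
  move: hX.
  set S := ('C(p.+2, j) + 'C(p, j))%N. set C := 'C(_, _). set N := Nn _.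
  set F := (p.*2.+3)`!. set J := j`!. set NF := n`!. set T := ('C(n, p) + _)%N.
  set P1 := 2 ^+ j.+2. set P2 := 2 ^+ ((p.+2).*2 + 1).
  move=> hX.
  have CP : C%:R != 0 :> rat by rewrite pnatr_eq0 -lt0n.
  have NP : N%:R != 0 :> rat by rewrite pnatr_eq0 -lt0n.
  have FP : F%:R != 0 :> rat by rewrite pnatr_eq0 -lt0n fact_gt0.
  have JP : J%:R != 0 :> rat by rewrite pnatr_eq0 -lt0n fact_gt0.
  have SP : S%:R != 0 :> rat by rewrite pnatr_eq0 -lt0n /S addn_gt0 bin_gt0; lia.
  have TP : T%:R != 0 :> rat by rewrite pnatr_eq0 -lt0n.
  have Q1 : P1 != 0 by rewrite expf_neq0.
  have Q2 : P2 != 0 by rewrite expf_neq0.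
  clearbody S C N F J NF T P1 P2.
  have eNF : NF%:R = 2 * F%:R * T%:R / (S%:R * J%:R * (p.+1)%:R * C%:R) :> rat.
    have := congr1 (fun n => n%:R : rat) hX; rewrite /= !natrM => h.
    apply/(mulIf (_ : S%:R * J%:R * (p.+1)%:R * C%:R != 0)).
      by rewrite !mulf_neq0 // pnatr_eq0.
    rewrite divfK; last by rewrite !mulf_neq0 // pnatr_eq0.
    rewrite -h; ring.
  rewrite !natrM eNF.
  rewrite !mulrSr.
  have hp := ler0n rat p.
  field.
  sidec.
- rewrite add0n. apply: NT3 => //; rewrite /n; lia.
Qed.

Theorem lemma3p2 (k : nat) :
  ~~ odd k -> (4 <= k)%N ->
  [/\ padic_val_ge 2 (dk (k - 2) / (2 * ck k * dk k)) 1,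
      padic_val_ge 2 (k%:R * dk (k./2) ^+ 2 / (2 * ck k * dk k)) 0 &
      forall j : nat, odd j -> (j <= k./2 - 2)%N ->
        padic_val_ge 2
          (('C(k./2, j) + 'C(k./2 - 2, j))%:R * dk j.+1 * dk (k - j - 1)
             / (ck k * dk k)) 0].
Proof.
move=> ek k4.
have [p ->] : exists p, k = (p.+2).*2.
  exists (k./2 - 2)%N. have := odd_double_half k. rewrite (negbTE ek) add0n. lia.
split.
- exact: X1.
- exact: X2.
- rewrite doubleK. have -> : (p.+2 - 2 = p)%N by lia.
  move=> j oj hj. exact: X3.
Qed.
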